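(* Let $H_1,H_2$ be complex Hilbert spaces. The set $\{A\in\mathcal B(H_1,H_2): A \text{ is minimum attaining and bounded below}\}$ is dense, in the operator norm, in $\{A\in\mathcal B(H_1,H_2): A\text{ is bounded below}\}$.
   Context: Hilbert spaces are complex and infinite dimensional. For $A\in\mathcal B(H_1,H_2)$, $m(A)=\inf\{\|Ax\|:\|x\|=1\}$; $A$ is minimum attaining if there exists $x_0$ with $\|x_0\|=1$ and $\|Ax_0\|=m(A)$; $A$ is bounded below if there is $c>0$ with $\|Ax\|\geq c\|x\|$ for all $x$. *)

(* Defs.v *)
From mathcomp Require Import all_boot all_order all_algebra.
From mathcomp Require Import all_classical all_reals.
From mathcomp.real_closed Require Import complex.
Set Implicit Arguments. Unset Strict Implicit. Unset Printing Implicit Defensive.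
Import Order.TTheory GRing.Theory Num.Theory.
Local Open Scope ring_scope.
Local Open Scope classical_set_scope.

Section Hilbert.
Variable R : realType.
Local Notation C := (R[i]).

Section Space.
Variable V : lmodType C.
Variable ip : V -> V -> C.   (* inner product, linear in the first argument *)

Definition hnorm (x : V) : R := Num.sqrt (@complex.Re R (ip x x)).

Definition inner_product_axioms : Prop :=
  [/\ (forall (a : C) (x y z : V), ip (a *: x + y) z = a * ip x z + ip y z),
      (forall x y : V, ip y x = (ip x y)^*),
      (forall x : V, 0 <= ip x x) &
      (forall x : V, ip x x = 0 -> x = 0)].

Definition complete_hnorm : Prop :=
  forall u : nat -> V,
    (forall e : R, 0 < e -> exists N : nat, forall m n : nat,
        (N <= m)%N -> (N <= n)%N -> hnorm (u m - u n) < e) ->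
    exists l : V, forall e : R, 0 < e -> exists N : nat, forall n : nat,
        (N <= n)%N -> hnorm (u n - l) < e.

Definition infinite_dimensional : Prop :=
  forall s : seq V, exists v : V,
    forall c : nat -> C, v <> \sum_(i < size s) c i *: s`_i.

Definition complex_hilbert_space : Prop :=
  [/\ inner_product_axioms, complete_hnorm & infinite_dimensional].
End Space.

Section Operators.
Variables (V1 V2 : lmodType C) (ip1 : V1 -> V1 -> C) (ip2 : V2 -> V2 -> C).

Definition is_linear_op (A : V1 -> V2) : Prop :=
  forall (a : C) (x y : V1), A (a *: x + y) = a *: A x + A y.

Definition bounded_op (A : V1 -> V2) : Prop :=
  is_linear_op A /\
  exists M : R, forall x : V1, hnorm ip2 (A x) <= M * hnorm ip1 x.

Definition opnorm (A : V1 -> V2) : R :=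
  sup [set hnorm ip2 (A x) | x in [set x : V1 | hnorm ip1 x = 1]].

Definition min_modulus (A : V1 -> V2) : R :=
  inf [set hnorm ip2 (A x) | x in [set x : V1 | hnorm ip1 x = 1]].

Definition minimum_attaining (A : V1 -> V2) : Prop :=
  exists x0 : V1, hnorm ip1 x0 = 1 /\ hnorm ip2 (A x0) = min_modulus A.

Definition bounded_below (A : V1 -> V2) : Prop :=
  exists c : R, 0 < c /\ forall x : V1, c * hnorm ip1 x <= hnorm ip2 (A x).
End Operators.
End Hilbert.

(* Main.v *)
Require Import Defs.
From mathcomp Require Import all_boot all_order all_algebra.
From mathcomp Require Import all_classical all_reals.
From mathcomp.real_closed Require Import complex.
From mathcomp Require Import ring lra.
Import Order.TTheory GRing.Theory Num.Theory.
Local Open Scope ring_scope.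

Local Notation "x %:C" := (real_complex _ x) : ring_scope.
Set Implicit Arguments. Unset Strict Implicit. Unset Printing Implicit Defensive.

Definition nc (R : realType) (z : R[i]) : R := complex.Re z ^+ 2 + complex.Im z ^+ 2.
Definition Nm (R : realType) (V : lmodType R[i]) (ip : V -> V -> R[i]) (x : V) : R :=
  complex.Re (ip x x).

Lemma cE (R : realType) (z : R[i]) : z = (complex.Re z +i* complex.Im z)%C.
Proof. by case: z. Qed.

Lemma nc_ge0 (R : realType) (z : R[i]) : 0 <= nc z.
Proof. rewrite /nc; apply: addr_ge0; apply: sqr_ge0. Qed.

Lemma ncM (R : realType) (z w : R[i]) : nc (z * w) = nc z * nc w.
Proof. case: z => a b; case: w => c d; rewrite /nc /=; ring. Qed.

Lemma ncJ (R : realType) (z : R[i]) : nc (Num.conj z) = nc z.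
Proof. case: z => a b; rewrite /nc /=; ring. Qed.

Lemma ncR (R : realType) (r : R) : nc (r%:C) = r ^+ 2.
Proof. rewrite /nc /=; ring. Qed.

Lemma mulJ (R : realType) (z : R[i]) : z * Num.conj z = (nc z)%:C.
Proof. case: z => a b; rewrite /nc /=; apply/eqP; rewrite eq_complex /=; apply/andP; split; apply/eqP; ring. Qed.

Lemma ReJ (R : realType) (z : R[i]) : complex.Re (Num.conj z) = complex.Re z.
Proof. by case: z. Qed.

Lemma ReD (R : realType) (z w : R[i]) : complex.Re (z + w) = complex.Re z + complex.Re w.
Proof. by case: z; case: w. Qed.

Lemma JM (R : realType) (z w : R[i]) : Num.conj (z * w) = Num.conj z * Num.conj w.
Proof. case: z => a b; case: w => c d; apply/eqP; rewrite eq_complex /=; apply/andP; split; apply/eqP; ring. Qed.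

Lemma JJ (R : realType) (z : R[i]) : Num.conj (Num.conj z) = z.
Proof. case: z => a b; apply/eqP; rewrite eq_complex /=; apply/andP; split; apply/eqP; ring. Qed.

Lemma JR (R : realType) (r : R) : Num.conj (r%:C) = r%:C.
Proof. apply/eqP; rewrite eq_complex /=; apply/andP; split; apply/eqP; ring. Qed.

Lemma J0 (R : realType) : Num.conj (0 : R[i]) = 0.
Proof. apply/eqP; rewrite eq_complex /=; apply/andP; split; apply/eqP; ring. Qed.

Lemma JN (R : realType) (z : R[i]) : Num.conj (- z) = - Num.conj z.
Proof. case: z => a b; apply/eqP; rewrite eq_complex /=; apply/andP; split; apply/eqP; ring. Qed.

Lemma JD (R : realType) (z w : R[i]) : Num.conj (z + w) = Num.conj z + Num.conj w.
Proof. case: z => a b; case: w => c d; apply/eqP; rewrite eq_complex /=; apply/andP; split; apply/eqP; ring. Qed.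

Lemma ReRM (R : realType) (r : R) (z : R[i]) : complex.Re (r%:C * z) = r * complex.Re z.
Proof. case: z => a b /=; ring. Qed.

Lemma nc0 (R : realType) : nc (0 : R[i]) = 0.
Proof. rewrite /nc /=; ring. Qed.

Section IP.
Variable R : realType.
Variables (V : lmodType R[i]) (ip : V -> V -> R[i]).
Hypothesis ax : inner_product_axioms ip.

Lemma ip_lin a x y z : ip (a *: x + y) z = a * ip x z + ip y z.
Proof. by case: ax. Qed.
Lemma ipC x y : ip y x = Num.conj (ip x y).
Proof. by case: ax. Qed.
Lemma ip0l z : ip 0 z = 0.
Proof.
have := ip_lin 1 0 0 z; rewrite scale1r addr0 mul1r => /esym /eqP.
by rewrite -subr_eq0 addrK => /eqP.
Qed.
Lemma ipDl x y z : ip (x + y) z = ip x z + ip y z.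
Proof. by rewrite -[x]scale1r ip_lin mul1r scale1r. Qed.
Lemma ipZl a x z : ip (a *: x) z = a * ip x z.
Proof. by rewrite -[a *: x]addr0 ip_lin ip0l addr0. Qed.
Lemma ipNl x z : ip (- x) z = - ip x z.
Proof. by rewrite -scaleN1r ipZl mulN1r. Qed.
Lemma ipBl x y z : ip (x - y) z = ip x z - ip y z.
Proof. by rewrite ipDl ipNl. Qed.
Lemma ip0r z : ip z 0 = 0.
Proof. by rewrite ipC ip0l J0. Qed.
Lemma ipDr x y z : ip z (x + y) = ip z x + ip z y.
Proof. rewrite ipC ipDl [ip x z]ipC [ip y z]ipC. by rewrite JD !JJ. Qed.
Lemma ipZr a x z : ip z (a *: x) = Num.conj a * ip z x.
Proof. by rewrite ipC ipZl JM -ipC. Qed.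
Lemma ipNr x z : ip z (- x) = - ip z x.
Proof. by rewrite ipC ipNl JN -ipC. Qed.
Lemma ipBr x y z : ip z (x - y) = ip z x - ip z y.
Proof. by rewrite ipDr ipNr. Qed.

Lemma ip_real x : ip x x = (Nm ip x)%:C.
Proof.
case: ax => _ _ hge _; have := hge x; rewrite lecE /= => /andP[/eqP h _].
by rewrite /Nm; move: h; case: (ip x x) => a b /= ->.
Qed.
Lemma Nm_ge0 x : 0 <= Nm ip x.
Proof. case: ax => _ _ hge _; have := hge x; rewrite lecE /= => /andP[_ h]. exact h. Qed.
Lemma Nm_eq0 x : Nm ip x = 0 -> x = 0.
Proof. case: ax => _ _ _ h0 h; apply: h0; by rewrite ip_real h. Qed.
Lemma Nm0 : Nm ip 0 = 0.
Proof. by rewrite /Nm ip0l. Qed.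
Lemma NmD x y : Nm ip (x + y) = Nm ip x + Nm ip y + 2 * complex.Re (ip x y).
Proof.
rewrite /Nm ipDl !ipDr [ip y x]ipC !ReD ReJ. ring.
Qed.
Lemma NmZ a x : Nm ip (a *: x) = nc a * Nm ip x.
Proof. rewrite /Nm ipZl ipZr mulrA mulJ ip_real /=. ring. Qed.
Lemma hnormE x : hnorm ip x = Num.sqrt (Nm ip x).
Proof. by []. Qed.
Lemma hnorm_sq x : hnorm ip x ^+ 2 = Nm ip x.
Proof. by rewrite hnormE sqr_sqrtr // Nm_ge0. Qed.
Lemma hnorm_ge0 x : 0 <= hnorm ip x.
Proof. by rewrite hnormE sqrtr_ge0. Qed.
End IP.
Lemma ncN (R : realType) (z : R[i]) : nc (- z) = nc z.
Proof. case: z => a b; rewrite /nc /=; ring. Qed.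

Lemma ReX (R : realType) (r : R) (c : R[i]) :
  complex.Re (- ((r%:C)%C * Num.conj c) * c) = - r * nc c.
Proof. case: c => a b; rewrite /nc /=; ring. Qed.

Section Ops.
Variable R : realType.
Variables (V1 V2 : lmodType R[i]) (ip1 : V1 -> V1 -> R[i]) (ip2 : V2 -> V2 -> R[i]).
Hypothesis ax1 : inner_product_axioms ip1.
Hypothesis ax2 : inner_product_axioms ip2.
Variable A : V1 -> V2.
Hypothesis linA : is_linear_op A.

Lemma lin0 : A 0 = 0.
Proof.
have := linA 1 0 0; rewrite !scale1r addr0 => /esym /eqP.
by rewrite -subr_eq0 addrK => /eqP.
Qed.
Lemma linD x y : A (x + y) = A x + A y.
Proof. by have := linA 1 x y; rewrite !scale1r. Qed.
Lemma linZ a x : A (a *: x) = a *: A x.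
Proof. by have := linA a x 0; rewrite !addr0 lin0 addr0. Qed.
Lemma linN x : A (- x) = - A x.
Proof. by rewrite -scaleN1r linZ scaleN1r. Qed.
Lemma linB x y : A (x - y) = A x - A y.
Proof. by rewrite linD linN. Qed.

Lemma normalize (x : V1) : 0 < Nm ip1 x ->
  exists k : R, 0 < k /\ k ^+ 2 * Nm ip1 x = 1 /\ Nm ip1 ((k%:C)%C *: x) = 1.
Proof.
move=> hx; exists (Num.sqrt (Nm ip1 x))^-1.
have hs : 0 < Num.sqrt (Nm ip1 x) by rewrite sqrtr_gt0.
have e1 : (Num.sqrt (Nm ip1 x))^-1 ^+ 2 * Nm ip1 x = 1.
  by rewrite exprVn sqr_sqrtr ?mulVf // ?(ltW hx) // gt_eqF.
split; first by rewrite invr_gt0.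
by split => //; rewrite NmZ // ncR.
Qed.

Lemma lower_bound (m : R) : 0 <= m ->
  (forall x, hnorm ip1 x = 1 -> m <= hnorm ip2 (A x)) ->
  forall x, m ^+ 2 * Nm ip1 x <= Nm ip2 (A x).
Proof.
move=> m0 hm x.
have [hx|hx] := eqVneq (Nm ip1 x) 0.
  by rewrite hx mulr0 Nm_ge0.
have hxp : 0 < Nm ip1 x by rewrite lt_neqAle eq_sym hx Nm_ge0.
have [k [k0 [ek ek1]]] := normalize hxp.
have := hm ((k%:C)%C *: x); rewrite hnormE ek1 sqrtr1 => /(_ erefl) h.
have h2 : m ^+ 2 <= Nm ip2 (A ((k%:C)%C *: x)).
  rewrite -(hnorm_sq ax2); rewrite ler_sqr ?nnegrE //; exact: hnorm_ge0.
move: h2; rewrite linZ NmZ // ncR => h2.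
have := ler_wpM2r (Nm_ge0 ax1 x) h2.
move=> h5; have e : k ^+ 2 * Nm ip2 (A x) * Nm ip1 x = Nm ip2 (A x).
  transitivity ((k ^+ 2 * Nm ip1 x) * Nm ip2 (A x)); first ring.
  by rewrite ek mul1r.
by rewrite -e.
Qed.

Variable x0 : V1.
Hypothesis hx0 : Nm ip1 x0 = 1.
Variables (K m : R).
Hypothesis K0 : 0 <= K.
Hypothesis hK : forall x, Nm ip2 (A x) <= K * Nm ip1 x.
Hypothesis hm : forall x, m ^+ 2 * Nm ip1 x <= Nm ip2 (A x).

Lemma CS y : ip1 y x0 = 0 ->
  nc (ip2 (A y) (A x0)) <= (Nm ip2 (A x0) - m ^+ 2) * (K + 1) * Nm ip1 y.
Proof.
move=> hy.
have D0 : 0 <= Nm ip2 (A x0) - m ^+ 2 by have := hm x0; rewrite hx0 mulr1 subr_ge0.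
have [hN|hN] := eqVneq (Nm ip1 y) 0.
  have -> : y = 0 by apply: (Nm_eq0 ax1).
  by rewrite lin0 ip0l // nc0 Nm0 // mulr0.
have Np : 0 < Nm ip1 y by rewrite lt_neqAle eq_sym hN Nm_ge0.
set c := ip2 (A y) (A x0).
set N := Nm ip1 y.
set W := (K + 1) * N.
have W0 : 0 < W by rewrite mulr_gt0 // ltr_wpDl.
set r := W^-1.
have r0 : 0 < r by rewrite invr_gt0.
have rW : r * W = 1 by rewrite mulVf // gt_eqF.
set s := - ((r%:C)%C * Num.conj c).
have ncs : nc s = r ^+ 2 * nc c by rewrite ncN ncM ncR ncJ.
have hz := hm (x0 + s *: y).
have e1 : Nm ip1 (x0 + s *: y) = 1 + r ^+ 2 * nc c * N.
  rewrite NmD // NmZ // hx0 ncs ipZr // [ip1 x0 y]ipC // hy J0 mulr0 /=. rewrite /N. ring.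
have e2 : Nm ip2 (A (x0 + s *: y)) = Nm ip2 (A x0) + r ^+ 2 * nc c * Nm ip2 (A y) - 2 * r * nc c.
  rewrite linD linZ NmD // NmZ // ncs ipZr // [ip2 (A x0) (A y)]ipC // -/c.
  have -> : complex.Re (Num.conj s * Num.conj c) = - r * nc c.
    by rewrite -JM ReJ /s ReX.
  ring.
rewrite e1 e2 in hz.
have hA := hK y.
have C0 := nc_ge0 c.
have h3 : 2 * r * nc c <= (Nm ip2 (A x0) - m ^+ 2) + r ^+ 2 * nc c * (K * N - m ^+ 2 * N).
  have : r ^+ 2 * nc c * Nm ip2 (A y) <= r ^+ 2 * nc c * (K * N).
    by apply: ler_wpM2l => //; rewrite mulr_ge0 // sqr_ge0.
  move=> h; nra.
have h4 : r * nc c <= Nm ip2 (A x0) - m ^+ 2.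
  have : r ^+ 2 * nc c * (K * N - m ^+ 2 * N) <= r * nc c * (r * W).
    rewrite /W -subr_ge0.
    have -> : r * nc c * (r * ((K + 1) * N)) - r ^+ 2 * nc c * (K * N - m ^+ 2 * N)
      = r * r * nc c * (N + m ^+ 2 * N) by ring.
    have r0' := ltW r0; have N0' := ltW Np.
    apply: mulr_ge0; first by apply: mulr_ge0 => //; apply: mulr_ge0.
    by apply: addr_ge0 => //; apply: mulr_ge0 => //; apply: sqr_ge0.
  rewrite rW mulr1 => h; lra.
have -> : nc c = r * nc c * W by rewrite mulrAC rW mul1r.
have -> : (Nm ip2 (A x0) - m ^+ 2) * (K + 1) * N = (Nm ip2 (A x0) - m ^+ 2) * W
  by rewrite /W; ring.
by apply: ler_wpM2r => //; exact: ltW.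
Qed.
End Ops.

Lemma lin_add (R : realType) (V1 V2 : lmodType R[i]) (f g : V1 -> V2) :
  is_linear_op f -> is_linear_op g -> is_linear_op (fun x => f x + g x).
Proof. move=> hf hg a x y; by rewrite hf hg scalerDr addrACA. Qed.

Lemma lin_comp (R : realType) (V1 V2 V3 : lmodType R[i]) (f : V1 -> V2) (g : V2 -> V3) :
  is_linear_op f -> is_linear_op g -> is_linear_op (fun x => g (f x)).
Proof. move=> hf hg a x y; by rewrite hf hg. Qed.

Lemma lin_proj (R : realType) (V : lmodType R[i]) (ip : V -> V -> R[i]) (e : V) :
  inner_product_axioms ip -> is_linear_op (fun x => x - ip x e *: e).
Proof.
move=> ax a x y; rewrite ip_lin // scalerDl -scalerA scalerBr.
by rewrite opprD addrACA.
Qed.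

Lemma lin_rank1 (R : realType) (V1 V2 : lmodType R[i]) (ip : V1 -> V1 -> R[i])
  (x0 : V1) (w : V2) (t : R[i]) :
  inner_product_axioms ip -> is_linear_op (fun x => (ip x x0 * t) *: w).
Proof.
move=> ax a x y; by rewrite ip_lin // mulrDl scalerDl scalerA mulrA.
Qed.

Lemma ReY (R : realType) (g : R[i]) : complex.Re (Num.conj (- g) * g) = - nc g.
Proof. case: g => a b; rewrite /nc /=; ring. Qed.

Lemma zmod1 (V: zmodType) (p z q r : V) : z + p - (z - q + r) = (p - r) + q.
Proof. by rewrite [z + p]addrC opprD opprB [q - z]addrC !addrA addrK addrAC. Qed.

Lemma CB (R : realType) (a b : R) : ((a - b)%:C)%C = ((a%:C)%C - (b%:C)%C : R[i]).
Proof. apply/eqP; rewrite eq_complex /=; apply/andP; split; apply/eqP; ring. Qed.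

Definition Bop (R : realType) (V1 V2 : lmodType R[i]) (ip1 : V1 -> V1 -> R[i])
  (ip2 : V2 -> V2 -> R[i]) (A : V1 -> V2) (x0 : V1) (e : V2) (t : R) (x : V1) : V2 :=
  (A (x - ip1 x x0 *: x0) - ip2 (A (x - ip1 x x0 *: x0)) e *: e) + (ip1 x x0 * (t%:C)%C) *: e.

Section Constr.
Variable R : realType.
Variables (V1 V2 : lmodType R[i]) (ip1 : V1 -> V1 -> R[i]) (ip2 : V2 -> V2 -> R[i]).
Hypothesis ax1 : inner_product_axioms ip1.
Hypothesis ax2 : inner_product_axioms ip2.
Variable A : V1 -> V2.
Hypothesis linA : is_linear_op A.
Variable x0 : V1.
Hypothesis hx0 : Nm ip1 x0 = 1.
Variable n0 : R.
Hypothesis n00 : 0 < n0.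
Hypothesis hn0 : Nm ip2 (A x0) = n0 ^+ 2.
Variable t : R.

Definition ee := ((n0^-1)%:C)%C *: A x0.

Lemma ipx0 : ip1 x0 x0 = 1.
Proof. by rewrite (ip_real ax1) hx0. Qed.

Lemma Nm_e : Nm ip2 ee = 1.
Proof. by rewrite /ee NmZ // ncR hn0 -exprMn mulVf ?expr1n ?gt_eqF. Qed.

Lemma ip_e : ip2 ee ee = 1.
Proof. by rewrite (ip_real ax2) Nm_e. Qed.

Lemma Ax0e : A x0 = ((n0%:C)%C) *: ee.
Proof.
rewrite /ee scalerA.
have -> : ((n0%:C)%C * (n0^-1)%:C)%C = 1 :> R[i].
  have hn : n0 != 0 by rewrite gt_eqF.
  apply/eqP; rewrite eq_complex /= (mulfV hn); apply/andP; split; apply/eqP; ring.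
by rewrite scale1r.
Qed.

Lemma y_orth x : ip1 (x - ip1 x x0 *: x0) x0 = 0.
Proof. by rewrite ipBl // ipZl // ipx0 mulr1 subrr. Qed.

Lemma Nm_decomp x : Nm ip1 x = nc (ip1 x x0) + Nm ip1 (x - ip1 x x0 *: x0).
Proof.
set a := ip1 x x0; set y := x - a *: x0.
have ex : x = a *: x0 + y by rewrite /y addrC subrK.
rewrite {1}ex NmD // NmZ // hx0 mulr1 ipZl // [ip1 x0 y]ipC // y_orth J0 mulr0 /=.
ring.
Qed.

Lemma NmB x : Nm ip2 (Bop ip1 ip2 A x0 ee t x) =
  Nm ip2 (A (x - ip1 x x0 *: x0)) - nc (ip2 (A (x - ip1 x x0 *: x0)) ee)
  + t ^+ 2 * nc (ip1 x x0).
Proof.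
rewrite /Bop.
set a := ip1 x x0; set z := A (x - a *: x0); set g := ip2 z ee.
have hu : ip2 (z - g *: ee) ee = 0 by rewrite ipBl // ipZl // ip_e mulr1 subrr.
rewrite NmD // NmZ // ipZr // hu mulr0 /= Nm_e mulr1 ncM ncR.
rewrite -scaleNr NmD // NmZ // Nm_e mulr1 ncN ipZr // -/g ReY.
ring.
Qed.

Lemma Bx0 : Bop ip1 ip2 A x0 ee t x0 = ((t%:C)%C) *: ee.
Proof.
rewrite /Bop ipx0 scale1r subrr lin0 // ip0l // scale0r subrr add0r mul1r //.
Qed.

Lemma AmB x : A x - Bop ip1 ip2 A x0 ee t x =
  (ip1 x x0 * ((n0 - t)%:C)%C + ip2 (A (x - ip1 x x0 *: x0)) ee) *: ee.
Proof.
rewrite /Bop.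
set a := ip1 x x0; set z := A (x - a *: x0); set g := ip2 z ee.
have -> : A x = z + (a * (n0%:C)%C) *: ee.
  by rewrite /z (linB linA) (linZ linA) Ax0e scalerA subrK.
by rewrite zmod1 CB mulrBr !scalerDl scaleNr.
Qed.

Lemma linB_op : is_linear_op (Bop ip1 ip2 A x0 ee t).
Proof.
apply: (lin_add (f := fun x => A (x - ip1 x x0 *: x0) - ip2 (A (x - ip1 x x0 *: x0)) ee *: ee)).
  apply: (lin_comp (f := fun x => A (x - ip1 x x0 *: x0)) (g := fun z => z - ip2 z ee *: ee)).
    apply: (lin_comp (f := fun x => x - ip1 x x0 *: x0)) => //; exact: lin_proj.
  exact: lin_proj.
exact: lin_rank1.
Qed.
End Constr.

Lemma params (R : realType) (m eps K1 tau eta n0 : R) :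
  0 < m -> 0 < eps -> 0 < K1 -> 0 < tau -> tau <= m / 2 -> tau <= eps / 8 ->
  0 < eta -> eta <= m -> eta <= eps / 8 -> 3 * K1 * eta <= tau * m ^+ 2 ->
  48 * K1 * eta <= m * eps ^+ 2 -> m <= n0 -> n0 < m + eta ->
  [/\ 0 < m - tau,
      (n0 ^+ 2 - m ^+ 2) * K1 <= (m ^+ 2 - (m - tau) ^+ 2) * n0 ^+ 2,
      (n0 ^+ 2 - m ^+ 2) * K1 <= n0 ^+ 2 * (eps ^+ 2 / 16) &
      0 <= n0 - (m - tau) <= eps / 4].
Proof.
move=> m0 e0 K0 t0 tm te h0 hm he h3 h4 mn nm.
have hd : n0 ^+ 2 - m ^+ 2 <= 3 * m * eta.
  have -> : n0 ^+ 2 - m ^+ 2 = (n0 - m) * (n0 + m) by ring.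
  have a1 : 0 <= n0 - m by lra.
  have a2 : n0 - m <= eta by lra.
  have a3 : n0 + m <= 3 * m by lra.
  have a4 : 0 <= n0 + m by lra.
  apply: le_trans (ler_pM a1 a4 a2 a3) _; lra.
have hdK : (n0 ^+ 2 - m ^+ 2) * K1 <= 3 * m * eta * K1 by apply: ler_wpM2r; lra.
have hn2 : m ^+ 2 <= n0 ^+ 2 by rewrite ler_sqr ?nnegrE; lra.
split.
- lra.
- apply: (le_trans hdK).
  have e1 : 3 * m * eta * K1 <= tau * m ^+ 3.
    have -> : 3 * m * eta * K1 = m * (3 * K1 * eta) by ring.
    have -> : tau * m ^+ 3 = m * (tau * m ^+ 2) by ring.
    apply: ler_wpM2l; lra.
  apply: (le_trans e1).
  have -> : m ^+ 2 - (m - tau) ^+ 2 = tau * (2 * m - tau) by ring.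
  have e2 : tau * m <= tau * (2 * m - tau) by apply: ler_wpM2l; lra.
  have -> : tau * m ^+ 3 = (tau * m) * m ^+ 2 by ring.
  apply: ler_pM => //.
  + apply: mulr_ge0; lra.
  + by rewrite sqr_ge0.
- apply: (le_trans hdK).
  have e1 : 3 * m * eta * K1 <= m ^+ 2 * (eps ^+ 2 / 16).
    have -> : 3 * m * eta * K1 = m * (48 * K1 * eta) / 16 by field.
    have -> : m ^+ 2 * (eps ^+ 2 / 16) = m * (m * eps ^+ 2) / 16 by field.
    apply: ler_wpM2r; first lra.
    apply: ler_wpM2l; lra.
  apply: (le_trans e1); apply: ler_wpM2r => //.
  apply: divr_ge0; [exact: sqr_ge0|lra].
- apply/andP; split; lra.
Qed.

Lemma pick4 (R : realType) (a b c d : R) : 0 < a -> 0 < b -> 0 < c -> 0 < d ->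
  exists eta : R, [/\ 0 < eta, eta <= a, eta <= b, eta <= c & eta <= d].
Proof.
move=> a0 b0 c0 d0; exists (Num.min (Num.min a b) (Num.min c d)).
split.
- by rewrite !lt_min a0 b0 c0 d0.
- by rewrite !ge_min lexx.
- by rewrite !ge_min lexx !orbT.
- by rewrite !ge_min lexx !orbT.
- by rewrite !ge_min lexx !orbT.
Qed.

Lemma sq_le (R : realType) (a b : R) : 0 <= a -> 0 <= b -> a ^+ 2 <= b ^+ 2 -> a <= b.
Proof. by move=> a0 b0; rewrite ler_sqr ?nnegrE. Qed.

Lemma nc_add (R : realType) (u v : R[i]) : nc (u + v) <= 2 * nc u + 2 * nc v.
Proof.
case: u => a b; case: v => c d; rewrite /nc /=.
have h1 : 0 <= (a - c) ^+ 2 by apply: sqr_ge0.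
have h2 : 0 <= (b - d) ^+ 2 by apply: sqr_ge0.
nra.
Qed.
Local Open Scope classical_set_scope.
Local Open Scope ring_scope.

Theorem corollary3p9 (R : realType)
  (H1 H2 : lmodType R[i]) (ip1 : H1 -> H1 -> R[i]) (ip2 : H2 -> H2 -> R[i])
  (hH1 : complex_hilbert_space ip1) (hH2 : complex_hilbert_space ip2) :
  forall A : H1 -> H2, bounded_op ip1 ip2 A -> bounded_below ip1 ip2 A ->
  forall eps : R, 0 < eps ->
  exists B : H1 -> H2,
    [/\ bounded_op ip1 ip2 B, minimum_attaining ip1 ip2 B,
        bounded_below ip1 ip2 B &
        opnorm ip1 ip2 (fun x => A x - B x) < eps].
Proof.
case: hH1 => ax1 _ inf1; case: hH2 => ax2 _ _.
move=> A [linA [M hM]] [c0 [c00 hc0]] eps eps0.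
have [u hu] : exists u : H1, hnorm ip1 u = 1.
  have [v hv] := inf1 [::].
  have v0 : v <> 0 by move=> e; apply: (hv (fun _ => 0)); rewrite big_ord0.
  have Nv : 0 < Nm ip1 v.
    rewrite lt_neqAle Nm_ge0 // andbT eq_sym; apply/eqP => /(Nm_eq0 ax1); exact: v0.
  have [k [_ [_ hk]]] := normalize ax1 Nv.
  by exists (((k%:C)%C) *: v); rewrite hnormE hk sqrtr1.
set S := [set hnorm ip2 (A x) | x in [set x : H1 | hnorm ip1 x = 1]].
have Sne : S !=set0 by exists (hnorm ip2 (A u)); exists u.
have Slb : lbound S c0.
  by move=> _ [x hx <-]; have := hc0 x; rewrite hx mulr1.
have hasl : has_lbound S by exists c0.
set m := min_modulus ip1 ip2 A.
have mS : m = inf S by [].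
have m0 : 0 < m by apply: (lt_le_trans c00); rewrite mS; exact: lb_le_inf.
have hm1 : forall x, hnorm ip1 x = 1 -> m <= hnorm ip2 (A x).
  by move=> x hx; rewrite mS; apply: (ge_inf hasl); exists x.
have hm := lower_bound ax1 ax2 linA (ltW m0) hm1.
have hK : forall x, Nm ip2 (A x) <= M ^+ 2 * Nm ip1 x.
  move=> x; rewrite -(hnorm_sq ax2) -(hnorm_sq ax1) -exprMn.
  have h1 := hM x; have h2 := hnorm_ge0 ip2 (A x).
  by rewrite ler_sqr ?nnegrE //; lra.
have M2 := sqr_ge0 M.
set K1 := M ^+ 2 + 1.
have K10 : 0 < K1 by rewrite /K1; lra.
set tau := Num.min (m / 2) (eps / 8).
have tau0 : 0 < tau by rewrite /tau lt_min; apply/andP; split; lra.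
have taum : tau <= m / 2 by rewrite /tau ge_min lexx.
have taue : tau <= eps / 8 by rewrite /tau ge_min lexx orbT.
have K30 : 0 < 3 * K1 by lra.
have K480 : 0 < 48 * K1 by lra.
have [eta [eta0 etam etae eta3 eta4]] :=
  pick4 (a := m) (b := eps / 8) (c := tau * m ^+ 2 / (3 * K1))
        (d := m * eps ^+ 2 / (48 * K1)) m0 ltac:(lra)
        (divr_gt0 (mulr_gt0 tau0 (exprn_gt0 2 m0)) K30)
        (divr_gt0 (mulr_gt0 m0 (exprn_gt0 2 eps0)) K480).
have h3 : 3 * K1 * eta <= tau * m ^+ 2.
  have := ler_wpM2l (ltW K30) eta3.
  have -> : 3 * K1 * (tau * m ^+ 2 / (3 * K1)) = tau * m ^+ 2.
    by field; rewrite gt_eqF.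
  by [].
have h4 : 48 * K1 * eta <= m * eps ^+ 2.
  have := ler_wpM2l (ltW K480) eta4.
  have -> : 48 * K1 * (m * eps ^+ 2 / (48 * K1)) = m * eps ^+ 2.
    by field; rewrite gt_eqF.
  by [].
have hlt : inf S < m + eta by rewrite -mS; lra.
have [y [x0 hx0 hy0] hy] := inf_lt Sne hlt.
subst y.
set n0 := hnorm ip2 (A x0).
have hx0' : Nm ip1 x0 = 1 by rewrite -(hnorm_sq ax1) hx0 expr1n.
have hn0 : Nm ip2 (A x0) = n0 ^+ 2 by rewrite hnorm_sq.
have mn0 : m <= n0 := hm1 x0 hx0.
have [t0 P2 P3 /andP[P4a P4b]] :=
  params m0 eps0 K10 tau0 taum taue eta0 etam etae h3 h4 mn0 hy.
have n00 : 0 < n0 by apply: lt_le_trans m0 mn0.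
have n20 : 0 < n0 ^+ 2 by apply: exprn_gt0.
set t := m - tau.
set B := Bop ip1 ip2 A x0 (ee A x0 n0) t.
have hg : forall x, nc (ip2 (A (x - ip1 x x0 *: x0)) (ee A x0 n0)) * n0 ^+ 2
    <= (n0 ^+ 2 - m ^+ 2) * K1 * Nm ip1 (x - ip1 x x0 *: x0).
  move=> x.
  have hc := CS ax1 ax2 linA hx0' M2 hK hm (y_orth ax1 hx0' x).
  rewrite hn0 in hc.
  rewrite /ee ipZr // ncM ncJ ncR mulrAC -exprMn mulVf ?gt_eqF // expr1n mul1r.
  exact: hc.
have hdec := Nm_decomp ax1 hx0'.
have hBb : forall x, t ^+ 2 * Nm ip1 x <= Nm ip2 (B x).
  move=> x; rewrite /B NmB // (hdec x).
  set y := x - ip1 x x0 *: x0.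
  set g := nc (ip2 (A y) (ee A x0 n0)).
  have hy1 := hm y.
  have hg1 := hg x; rewrite -/y -/g in hg1.
  have Ny := Nm_ge0 ax1 y.
  have hg2 : g <= (m ^+ 2 - t ^+ 2) * Nm ip1 y.
    rewrite -(ler_pM2r n20).
    apply: (le_trans hg1).
    have -> : (m ^+ 2 - t ^+ 2) * Nm ip1 y * n0 ^+ 2
      = ((m ^+ 2 - t ^+ 2) * n0 ^+ 2) * Nm ip1 y by ring.
    by apply: ler_wpM2r.
  lra.
have hBx0 : B x0 = ((t%:C)%C) *: ee A x0 n0 by rewrite /B Bx0.
have hnBx0 : hnorm ip2 (B x0) = t.
  rewrite hBx0 hnormE NmZ // Nm_e // mulr1 ncR sqrtr_sqr ger0_norm //; exact: ltW.
have hBb' : forall x, t * hnorm ip1 x <= hnorm ip2 (B x).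
  move=> x; apply: sq_le.
  - by apply: mulr_ge0; [exact: ltW | exact: hnorm_ge0].
  - exact: hnorm_ge0.
  by rewrite exprMn !hnorm_sq //; exact: hBb.
exists B; split.
- split; first exact: linB_op.
  exists (Num.sqrt (M ^+ 2 + t ^+ 2)) => x.
  apply: sq_le.
  + exact: hnorm_ge0.
  + by apply: mulr_ge0; [exact: sqrtr_ge0 | exact: hnorm_ge0].
  rewrite (hnorm_sq ax2) exprMn (hnorm_sq ax1) sqr_sqrtr; last first.
    by apply: addr_ge0; apply: sqr_ge0.
  rewrite /B NmB // (hdec x).
  set y := x - ip1 x x0 *: x0.
  have := hK y; have := nc_ge0 (ip2 (A y) (ee A x0 n0)).
  have := Nm_ge0 ax1 y; have := nc_ge0 (ip1 x x0); have := sqr_ge0 t.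
  move=> *; nra.
- exists x0; split => //.
  rewrite hnBx0 /min_modulus.
  set SB := [set hnorm ip2 (B x) | x in [set x : H1 | hnorm ip1 x = 1]].
  have SBt : SB t by exists x0.
  have lbt : lbound SB t.
    by move=> _ [x hx <-]; have := hBb' x; rewrite hx mulr1.
  apply/le_anti/andP; split.
  + by apply: lb_le_inf => //; exists t.
  + by apply: (ge_inf (ex_intro _ t lbt)).
- exists t; split => //.
- rewrite /opnorm.
  apply: (@le_lt_trans _ _ (eps / 2)); last by lra.
  apply: ge_sup.
    by exists (hnorm ip2 (A x0 - B x0)); exists x0.
  move=> _ [x hx <-].
  have hx1 : Nm ip1 x = 1 by rewrite -(hnorm_sq ax1) hx expr1n.
  have dx := hdec x; rewrite hx1 in dx.
  apply: sq_le; [exact: hnorm_ge0 | lra |].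
  rewrite hnorm_sq // /B AmB // NmZ // Nm_e // mulr1.
  set y := x - ip1 x x0 *: x0.
  set a := ip1 x x0.
  set gg := ip2 (A y) (ee A x0 n0).
  have hg1 := hg x; rewrite -/y -/gg in hg1.
  have Ny := Nm_ge0 ax1 y.
  have na := nc_ge0 a.
  have ng := nc_ge0 gg.
  have hgg : nc gg <= eps ^+ 2 / 16.
    rewrite -(ler_pM2r n20).
    apply: (le_trans hg1).
    have e1 : (n0 ^+ 2 - m ^+ 2) * K1 * Nm ip1 y <= (n0 ^+ 2 - m ^+ 2) * K1.
      rewrite -[X in _ <= X]mulr1; apply: ler_wpM2l; last by lra.
      apply: mulr_ge0; last exact: ltW.
      rewrite subr_ge0 ler_sqr ?nnegrE //; exact: ltW.
    apply: (le_trans e1); rewrite [X in _ <= X]mulrC; exact: P3.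
  have hnt : (n0 - t) ^+ 2 <= eps ^+ 2 / 16.
    have -> : eps ^+ 2 / 16 = (eps / 4) ^+ 2 by field.
    rewrite ler_sqr ?nnegrE //; lra.
  apply: (le_trans (nc_add _ _)).
  rewrite ncM ncR.
  have hab : nc a * (n0 - t) ^+ 2 <= eps ^+ 2 / 16.
    have : nc a <= 1 by lra.
    move=> h1; have := sqr_ge0 (n0 - t); nra.
  have -> : (eps / 2) ^+ 2 = eps ^+ 2 / 4 by field.
  lra.
Qed.
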